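(* Let $S$ be a set of primes and $(a_{S,n})_{n\ge1}$ a sequence. Then \[ a_{S,n}=\prod_{p\in S}\frac{1}{p-1}\left(\frac{p+1}{|n|_p}-2\right)\quad\text{for all } n\ge1 \] if and only if \[ \sum_{n\ge1}\frac{a_{S,n}}{n^s}=\zeta(s)\prod_{p\in S}\frac{p^s+1}{p^s-p} \] (as Dirichlet series, each factor $\frac{p^s+1}{p^s-p}=\frac{1+p^{-s}}{1-p^{1-s}}$ being expanded as a Dirichlet series in $p^{-s}$).
   Context: $|\cdot|_p$ is the $p$-adic absolute value, so $|n|_p^{-1}$ is the largest power of $p$ dividing $n$. $\zeta(s)=\sum_{n\ge1}n^{-s}$. *)

(* Defs.v *)
From HB Require Import structures.
From mathcomp Require Import all_boot all_order all_algebra.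
Set Implicit Arguments. Unset Strict Implicit. Unset Printing Implicit Defensive.
Import Order.TTheory GRing.Theory Num.Theory.
Local Open Scope ring_scope.

Section Dirichlet.
Variable R : numFieldType.

(* Formal Dirichlet series are represented by their coefficient sequences
   f : nat -> R (only indices n >= 1 are meaningful); the product of formal
   Dirichlet series is Dirichlet convolution. *)
Definition dconv (f g : nat -> R) : nat -> R :=
  fun n => \sum_(d <- divisors n) f d * g (n %/ d)%N.

Definition dunit : nat -> R := fun n => (n == 1)%:R.

Definition zeta_coef : nat -> R := fun n => (0 < n)%N%:R.

(* 1 + p^{-s} *)
Definition euler_num (p : nat) : nat -> R :=
  fun n => ((n == 1) + (n == p))%N%:R.

(* 1/(1 - p^{1-s}) = sum_{k>=0} p^k (p^k)^{-s} *)
Definition euler_geom (p : nat) : nat -> R :=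
  fun n => if n == (p ^ logn p n)%N then (p ^ logn p n)%:R else 0.

Definition euler_factor (p : nat) : nat -> R :=
  dconv (euler_num p) (euler_geom p).

Definition euler_partial (S : pred nat) (N : nat) : nat -> R :=
  \big[dconv/dunit]_(0 <= p < N | p \in S) euler_factor p.

End Dirichlet.

Definition padic_abs_inv (p n : nat) : nat := (p ^ logn p n)%N.

Definition local_factor (R : numFieldType) (p n : nat) : R :=
  (p%:R - 1)^-1 * ((p.+1)%:R * (padic_abs_inv p n)%:R - 2).

(* "eventually in N": used to express the (coefficientwise, eventually
   stable) limit of partial products over p in S, p < N. *)
Definition eventually (P : nat -> Prop) : Prop :=
  exists N0, forall N, (N0 <= N)%N -> P N.

(* Main.v *)
Require Import Defs.
From HB Require Import structures.
From mathcomp Require Import all_boot all_order all_algebra.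
From mathcomp Require Import zify ring lra.
Import Order.TTheory GRing.Theory Num.Theory.
Local Open Scope ring_scope.

Section Aux.
Variable R : numFieldType.
Implicit Types f g h : nat -> R.

Lemma sum_delta (K a : nat) (F : nat -> R) :
  \sum_(e < K) (e == a :> nat)%:R * F e = if (a < K)%N then F a else 0.
Proof.
elim: K => [|K IH]; first by rewrite big_ord0.
rewrite big_ord_recr /= IH.
case: eqP => /= E.
- subst a; rewrite ltnn ltnSn mul1r add0r //.
- rewrite mul0r addr0; case: (ltngtP a K) => H.
  + by rewrite (_ : (a < K.+1)%N = true) //; lia.
  + by rewrite (_ : (a < K.+1)%N = false) //; lia.
  + by exfalso; apply: E; rewrite H.
Qed.

Definition pconv (K : nat) f g (n : nat) : R :=
  \sum_(d < K) \sum_(e < K) (d * e == n)%N%:R * (f d * g e).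

Lemma divisors_perm n K : (0 < n)%N -> (n < K)%N ->
  perm_eq (divisors n) [seq d <- iota 0 K | (d %| n)%N].
Proof.
move=> n0 nK; apply: uniq_perm.
- exact: divisors_uniq.
- by rewrite filter_uniq // iota_uniq.
move=> d; rewrite mem_filter mem_iota -dvdn_divisors // add0n.
case dn: (d %| n)%N => //=.
have := dvdn_leq n0 dn; lia.
Qed.

Lemma dconv_pconv K f g n : (0 < n)%N -> (n < K)%N ->
  dconv f g n = pconv K f g n.
Proof.
move=> n0 nK; rewrite /dconv (perm_big _ (@divisors_perm n K n0 nK)) big_filter.
rewrite (_ : iota 0 K = index_iota 0 K); last by rewrite /index_iota subn0.
rewrite big_mkcond big_mkord /pconv.
apply: eq_bigr => d _.
case dn: (d %| n)%N.
- have d0 : (0 < d)%N.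
    case: (posnP d) => // d0; move: dn; rewrite d0 dvd0n; lia.
  have E : forall e, (d * e == n)%N = (e == n %/ d)%N.
    move=> e; rewrite -{1}(divnK dn) mulnC eqn_pmul2r //.
  under eq_bigr => e _ do rewrite E.
  rewrite (sum_delta K (n %/ d)%N (fun e => f d * g e)).
  have -> : (n %/ d < K)%N by have := leq_div n d; lia.
  done.
- rewrite big1 // => e _.
  have -> : (d * e == n)%N = false.
    by apply/negP => /eqP E; move: dn; rewrite -E dvdn_mulr.
  by rewrite mul0r.
Qed.


Lemma mulpos (d m n : nat) : (d * m = n -> 0 < n -> 0 < m /\ 0 < d /\ m <= n /\ d <= n)%N.
Proof. move=> <-; rewrite muln_gt0 => /andP[d0 m0]; do !split => //; [exact: leq_pmull | exact: leq_pmulr]. Qed.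

Lemma dconvC f g n : (0 < n)%N -> dconv f g n = dconv g f n.
Proof.
move=> n0; rewrite !(@dconv_pconv n.+1) // /pconv exchange_big /=.
apply: eq_bigr => d _; apply: eq_bigr => e _.
by rewrite [(e * d)%N]mulnC (mulrC (f _)).
Qed.

Lemma delta_step (K n a : nat) (Z : nat -> R) :
  (0 < n)%N -> (n < K)%N ->
  (forall m, (n < m)%N -> Z m = 0) ->
  \sum_(m < K) (m == a :> nat)%:R * Z m = Z a.
Proof.
move=> n0 nK HZ; rewrite sum_delta; case: ifP => // aK.
by rewrite HZ //; lia.
Qed.

Lemma dconvA f g h n : (0 < n)%N ->
  dconv f (dconv g h) n = dconv (dconv f g) h n.
Proof.
move=> n0; pose K := n.+1.
have nK : (n < K)%N by [].
pose T := \sum_(d < K) \sum_(e < K) \sum_(k < K)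
   (d * (e * k) == n)%N%:R * (f d * (g e * h k)).
transitivity T.
  rewrite (@dconv_pconv K) // /pconv /T.
  apply: eq_bigr => d _.
  transitivity (\sum_(m < K) \sum_(e < K) \sum_(k < K)
     (d * m == n)%N%:R * (f d * ((e * k == m)%N%:R * (g e * h k)))).
    apply: eq_bigr => m _.
    case E: (d * m == n)%N; last by rewrite mul0r big1 // => e _; rewrite big1 // => k _; rewrite mul0r.
    have [m0 [_ [mn _]]] := mulpos _ _ _ (eqP E) n0.
    have mK : (m < K)%N by rewrite /K ltnS.
    rewrite (@dconv_pconv K) // /pconv mul1r mulr_sumr; apply: eq_bigr => e _.
    rewrite mulr_sumr; apply: eq_bigr => k _; by rewrite mul1r.
  rewrite exchange_big /=; apply: eq_bigr => e _.
  rewrite exchange_big /=; apply: eq_bigr => k _.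
  transitivity (\sum_(m < K) (m == (e * k)%N :> nat)%:R *
     ((d * m == n)%N%:R * (f d * (g e * h k)))).
  - apply: eq_bigr => m _; rewrite [(e * k)%N == _]eq_sym; ring.
  apply: (@delta_step K n (e * k)%N
     (fun m => (d * m == n)%N%:R * (f d * (g e * h k)))) => //.
  - move=> m nm; case E: (d * m == n)%N; last by rewrite mul0r.
    have [_ [_ [mn mn']]] := mulpos _ _ _ (eqP E) n0; exfalso; lia.
symmetry; rewrite (@dconv_pconv K) // /pconv.
transitivity (\sum_(j < K) \sum_(k < K) \sum_(d < K) \sum_(e < K)
   (j * k == n)%N%:R * ((d * e == j)%N%:R * (f d * (g e * h k)))).
  apply: eq_bigr => j _; apply: eq_bigr => k _.
  case E: (j * k == n)%N; last by rewrite mul0r big1 // => d _; rewrite big1 // => e _; rewrite mul0r.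
  have [_ [j0 [_ jn]]] := mulpos _ _ _ (eqP E) n0.
  have jK : (j < K)%N by rewrite /K ltnS.
  rewrite (@dconv_pconv K) // /pconv mulr_suml mulr_sumr; apply: eq_bigr => d _.
  rewrite mulr_suml mulr_sumr; apply: eq_bigr => e _; ring.
rewrite exchange_big /=.
transitivity (\sum_(k < K) \sum_(d < K) \sum_(e < K)
   (d * e * k == n)%N%:R * (f d * (g e * h k))).
  apply: eq_bigr => k _.
  rewrite exchange_big /=; apply: eq_bigr => d _.
  rewrite exchange_big /=; apply: eq_bigr => e _.
  transitivity (\sum_(j < K) (j == (d * e)%N :> nat)%:R *
     ((j * k == n)%N%:R * (f d * (g e * h k)))).
  - apply: eq_bigr => j _; rewrite [(d * e)%N == _]eq_sym; ring.
  apply: (@delta_step K n (d * e)%N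
     (fun j => (j * k == n)%N%:R * (f d * (g e * h k)))) => //.
  - move=> m nm; case E: (m * k == n)%N; last by rewrite mul0r.
    have [_ [_ [mn mn']]] := mulpos _ _ _ (eqP E) n0; exfalso; lia.
rewrite exchange_big /=; apply: eq_bigr => d _.
rewrite exchange_big /=; apply: eq_bigr => e _.
apply: eq_bigr => k _; by rewrite mulnA.
Qed.


Lemma dconv_congr f f' g g' n : (0 < n)%N ->
  (forall d, (0 < d)%N -> f d = f' d) -> (forall d, (0 < d)%N -> g d = g' d) ->
  dconv f g n = dconv f' g' n.
Proof.
move=> n0 Hf Hg; rewrite /dconv big_seq [RHS]big_seq; apply: eq_bigr => d.
rewrite -dvdn_divisors // => dn.
have d0 : (0 < d)%N by apply: dvdn_gt0 dn.
have nd0 : (0 < n %/ d)%N by rewrite divn_gt0 // dvdn_leq.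
by rewrite Hf // Hg.
Qed.

Lemma dconv_unit n : (0 < n)%N -> dconv (zeta_coef R) (dunit R) n = 1.
Proof.
move=> n0; rewrite /dconv (bigD1_seq n) ?divisors_uniq ?divisors_id //=.
rewrite /zeta_coef /dunit divnn n0 eqxx mul1r big1_seq ?addr0 //.
move=> d /andP[dn]; rewrite -dvdn_divisors // => dvd.
rewrite (_ : (n %/ d == 1)%N = false) ?mulr0 //.
apply/negP => /eqP E; move/eqP: dn; apply.
by rewrite -(divnK dvd) E mul1n.
Qed.

Definition isPow (p d : nat) := (d == p ^ logn p d)%N.

Lemma sum_pow (p n : nat) (F : nat -> R) : prime p -> (0 < n)%N ->
  (forall d, (d %| n)%N -> ~~ isPow p d -> F d = 0) ->
  \sum_(d <- divisors n) F d = \sum_(k < (logn p n).+1) F (p ^ k)%N.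
Proof.
move=> pp n0 HF.
have p1 := prime_gt1 pp.
rewrite (bigID (isPow p)) /= [X in _ + X]big1_seq ?addr0; last first.
  by move=> d /andP[nP]; rewrite -dvdn_divisors // => dn; apply: HF.
rewrite -big_filter.
rewrite (perm_big [seq (p ^ k)%N | k <- iota 0 (logn p n).+1]); last first.
  apply: uniq_perm.
  - by rewrite filter_uniq // divisors_uniq.
  - by rewrite map_inj_uniq ?iota_uniq //; apply: expnI.
  move=> d; rewrite mem_filter -dvdn_divisors //; apply/andP/mapP.
  - move=> [dP dn]; exists (logn p d); last exact/eqP.
    rewrite mem_iota add0n ltnS -(pfactor_dvdn _ pp n0).
    by rewrite -(eqP dP).
  - move=> [k]; rewrite mem_iota add0n ltnS => kv ->; split.
    + by rewrite /isPow pfactorK.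
    + by rewrite pfactor_dvdn.
rewrite big_map (_ : iota 0 _ = index_iota 0 (logn p n).+1); last first.
  by rewrite /index_iota subn0.
by rewrite big_mkord.
Qed.


Lemma num_pow p j : prime p -> euler_num R p (p ^ j) = ((j == 0) + (j == 1))%N%:R.
Proof.
move=> pp; have p1 := prime_gt1 pp; rewrite /euler_num.
rewrite (_ : (p ^ j == 1)%N = (j == 0)%N); last by rewrite -[1%N](expn0 p) eqn_exp2l.
by rewrite (_ : (p ^ j == p)%N = (j == 1)%N) // -[X in (_ == X)%N](expn1 p) eqn_exp2l.
Qed.

Lemma geom_pow p i : prime p -> euler_geom R p (p ^ i) = (p ^ i)%:R.
Proof. by move=> pp; rewrite /euler_geom pfactorK // eqxx. Qed.

Lemma num_nz p d : prime p -> ~~ isPow p d -> euler_num R p d = 0.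
Proof.
move=> pp; rewrite /isPow /euler_num.
case: (eqVneq d 1) => [->|d1]; first by rewrite logn1 expn0 eqxx.
case: (eqVneq d p) => [->|dp]; first by have := pfactorK 1 pp; rewrite expn1 => ->; rewrite expn1 eqxx.
by [].
Qed.

Lemma factor_nonpow p d : prime p -> (0 < d)%N -> ~~ isPow p d ->
  euler_factor R p d = 0.
Proof.
move=> pp d0 nP; rewrite /euler_factor /dconv big1_seq // => e /andP[_].
rewrite -dvdn_divisors // => ed.
case: (boolP (isPow p e)) => eP; last by rewrite num_nz // mul0r.
rewrite /euler_geom; case: ifP => [H|]; last by rewrite mulr0.
exfalso; move/negP: nP; apply.
rewrite /isPow in eP *.
rewrite -(divnK ed) (eqP H) (eqP eP) -expnD pfactorK //.
Qed.

Definition Fv (p k : nat) : R := if k is k'.+1 then (p ^ k + p ^ k')%N%:R else 1.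

Lemma factor_pow p k : prime p -> euler_factor R p (p ^ k) = Fv p k.
Proof.
move=> pp; have p1 := prime_gt1 pp; have p0 := prime_gt0 pp.
rewrite /euler_factor /dconv.
rewrite (@sum_pow p (p ^ k)%N (fun d => euler_num R p d * euler_geom R p (p ^ k %/ d)%N)) //; last first.
- by move=> d _ nP; rewrite num_nz // mul0r.
- by rewrite expn_gt0 p0.
rewrite pfactorK //.
under eq_bigr => j _.
  rewrite num_pow // -expnB //; last by rewrite -ltnS.
  rewrite geom_pow //.
over.
case: k => [|k] /=.
  by rewrite big_ord1 /= mul1r.
rewrite big_ord_recl big_ord_recl /= big1 ?addr0; last first.
  by move=> j _; rewrite mul0r.
by rewrite subn0 subn1 /= !mul1r natrD.
Qed.


Lemma sumFv_aux p v : (p%:R - 1) * \sum_(k < v.+1) Fv p k =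
  (p.+1)%:R * (p ^ v)%N%:R - 2 :> R.
Proof.
elim: v => [|v IH].
  by rewrite big_ord1 /= expn0 mulr1 mulr1 -addn1 natrD; ring.
rewrite big_ord_recr /= mulrDr IH natrD !natrX -addn1 natrD.
rewrite !exprS; ring.
Qed.

Lemma sumFv p v : prime p -> \sum_(k < v.+1) Fv p k =
  (p%:R - 1)^-1 * ((p.+1)%:R * (p ^ v)%N%:R - 2) :> R.
Proof.
move=> pp; have p1 := prime_gt1 pp.
have H : (p%:R - 1 : R) != 0.
  by rewrite subr_eq0 (_ : 1 = 1%:R) // eqr_nat; apply/eqP; lia.
by rewrite -sumFv_aux mulKf.
Qed.


Lemma logn_div_pow q p k n : prime q -> prime p -> q != p -> (p ^ k %| n)%N ->
  logn q (n %/ p ^ k) = logn q n.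
Proof.
move=> qq pp qp dv; rewrite logn_div // lognX.
rewrite (_ : logn q p = 0%N) ?muln0 ?subn0 //.
rewrite lognE; case: ifP => // /and3P[_ _ qd]; move: qp; rewrite -(dvdn_prime2 qq pp) qd; by [].
Qed.

Lemma main_gen (S : pred nat) (HS : forall p, p \in S -> prime p) N j :
  forall m, (N - m)%N = j -> forall n, (0 < n)%N ->
  dconv (zeta_coef R) (\big[@dconv R/dunit R]_(m <= p < N | p \in S) euler_factor R p) n
  = \prod_(m <= p < N | p \in S) local_factor R p n.
Proof.
elim: j => [|j IH] m Hj n n0.
  rewrite !big_geq; try lia.
  exact: dconv_unit.
have mN : (m < N)%N by lia.
rewrite !(big_ltn_cond mN) /=.
case: ifP => mS; last by apply: IH => //; lia.
have pm := HS m mS.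
set B := \big[@dconv R/dunit R]_(m.+1 <= p < N | p \in S) euler_factor R p.
rewrite dconvA //.
rewrite (@dconv_congr (dconv (zeta_coef R) (euler_factor R m))
            (dconv (euler_factor R m) (zeta_coef R)) B B n) //; last first.
  by move=> d d0; rewrite dconvC.
rewrite -dconvA // {1}/dconv.
rewrite (@sum_pow m n (fun d => euler_factor R m d * dconv (zeta_coef R) B (n %/ d)%N)) //; last first.
  move=> d dn nP; rewrite factor_nonpow ?mul0r //.
  exact: dvdn_gt0 dn.
transitivity (\sum_(k < (logn m n).+1) Fv m k * \prod_(m.+1 <= p < N | p \in S) local_factor R p n).
  apply: eq_bigr => k _.
  have kv : (m ^ k %| n)%N by rewrite pfactor_dvdn // -ltnS.
  have nk0 : (0 < n %/ m ^ k)%N by rewrite divn_gt0 ?expn_gt0 ?prime_gt0 // dvdn_leq.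
  rewrite factor_pow // (IH (m.+1)) //; last by lia.
  congr (_ * _).
  rewrite big_nat_cond [RHS]big_nat_cond; apply: eq_bigr => q /andP[/andP[qlo _] qS].
  rewrite /local_factor /padic_abs_inv logn_div_pow //; first exact: HS.
  by apply/eqP => E; move: qlo; rewrite E ltnn.
by rewrite -mulr_suml sumFv.
Qed.

End Aux.

Theorem lemma3p4 (R : numFieldType) (S : pred nat)
    (HS : forall p, p \in S -> prime p) (a : nat -> R) :
  (forall n, (0 < n)%N ->
     eventually (fun N => a n = \prod_(0 <= p < N | p \in S) local_factor R p n))
  <->
  (forall n, (0 < n)%N ->
     eventually (fun N => a n = dconv (zeta_coef R) (euler_partial R S N) n)).
Proof.
have E : forall N n, (0 < n)%N ->
  dconv (zeta_coef R) (euler_partial R S N) n = \prod_(0 <= p < N | p \in S) local_factor R p n.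
  by move=> N n n0; rewrite /euler_partial (@main_gen R S HS N (N - 0)%N 0).
split=> H n n0; have [N0 HN] := H n n0; exists N0 => N NN.
  by rewrite E // (HN N NN).
by rewrite -E // (HN N NN).
Qed.
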